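(* For every fixed positive integer $p$, $$\lim_{d\to\infty}\frac{1}{d}\cdot\frac{|B(d,p)\cap\mathbb{P}^d_\circ|}{\kappa(B(d,p)\cap\mathbb{P}^d_\circ)}=\frac{1}{p}.$$
   Context: A point of $\mathbb{Z}^d$ is primitive if its coordinates are relatively prime; $\mathbb{P}^d_\circ$ denotes the set of primitive points of $\mathbb{Z}^d$ whose first non-zero coordinate is positive. $B(d,p)=\{x\in\mathbb{R}^d:\|x\|_1\le p\}$. For a finite $\mathcal{X}\subset\mathbb{R}^d$, $\kappa(\mathcal{X})=\max_{1\le i\le d}\sum_{x\in\mathcal{X}}|x_i|$. *)

(* Defs.v *)
From HB Require Import structures.
From mathcomp Require Import all_boot all_order all_algebra.
From mathcomp Require Import all_classical all_reals all_analysis.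
Set Implicit Arguments. Unset Strict Implicit. Unset Printing Implicit Defensive.
Import Order.TTheory GRing.Theory Num.Theory.

Definition l1norm (d : nat) (x : 'I_d -> int) : nat := (\sum_(i < d) `|x i|%N)%N.

(* primitive: coordinates relatively prime, i.e. gcd of all coordinates is 1
   (the zero vector has gcd 0 and is not primitive). *)
Definition primitive (d : nat) (x : 'I_d -> int) : bool :=
  (\big[gcdn/0%N]_(i < d) `|x i|%N) == 1%N.

Definition first_nonzero_pos (d : nat) (x : 'I_d -> int) : bool :=
  [exists i : 'I_d, (0 < x i)%R && [forall j : 'I_d, (j < i)%N ==> (x j == 0)]].

(* Every point with ||x||_1 <= p has all coordinates in [-p, p]; we encode such
   points injectively by {ffun 'I_d -> 'I_(2p+1)} via x_i = v_i - p. *)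
Definition decode (p d : nat) (v : {ffun 'I_d -> 'I_(2 * p + 1)}) : 'I_d -> int :=
  fun i => ((v i : nat)%:Z - p%:Z)%R.

Definition BP (p d : nat) : {set {ffun 'I_d -> 'I_(2 * p + 1)}} :=
  [set v | [&& (l1norm (decode v) <= p)%N, primitive (decode v)
             & first_nonzero_pos (decode v)]].

Definition kappa (p d : nat) : nat :=
  (\max_(i < d) \sum_(v in BP p d) `|decode v i|%N)%N.

(* Main.v *)
From Pilot Require Import Defs.
From HB Require Import structures.
From mathcomp Require Import all_boot all_order all_algebra.
From mathcomp Require Import all_classical all_reals all_analysis.
From mathcomp Require Import fingroup perm zify ring lra.
Import Order.TTheory GRing.Theory Num.Theory.
Import numFieldNormedType.Exports.
Import Pilot.Defs.
Set Implicit Arguments. Unset Strict Implicit.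

Definition negv p d (v : {ffun 'I_d -> 'I_(2 * p + 1)}) : {ffun 'I_d -> 'I_(2 * p + 1)} :=
  [ffun i => rev_ord (v i)].
Definition swapv p d (s : {perm (ordinal d)}) (v : {ffun 'I_d -> 'I_(2 * p + 1)}) : {ffun 'I_d -> 'I_(2 * p + 1)} :=
  [ffun i => v (s i)].

Lemma decode_neg p d v i : decode (@negv p d v) i = (- decode v i)%R.
Proof.
rewrite /decode /negv ffunE /=. have := ltn_ord (v i). 
move: (nat_of_ord (v i)) => a ha. lia.
Qed.
Lemma decode_swap p d s v i : decode (@swapv p d s v) i = decode v (s i).
Proof. by rewrite /decode /swapv ffunE. Qed.

Lemma absdec_neg p d v i : `|decode (@negv p d v) i|%N = `|decode v i|%N.
Proof. by rewrite decode_neg abszN. Qed.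

Lemma l1norm_neg p d v : l1norm (decode (@negv p d v)) = l1norm (decode v).
Proof. by apply: eq_bigr => i _; rewrite absdec_neg. Qed.
Lemma primitive_neg p d v : primitive (decode (@negv p d v)) = primitive (decode v).
Proof. by rewrite /primitive; congr (_ == _); apply: eq_bigr => i _; rewrite absdec_neg. Qed.

Lemma l1norm_swap p d s v : l1norm (decode (@swapv p d s v)) = l1norm (decode v).
Proof.
rewrite /l1norm [RHS](reindex_inj (@perm_inj _ s)) /=.
by apply: eq_bigr => i _; rewrite decode_swap.
Qed.
Lemma primitive_swap p d s v : primitive (decode (@swapv p d s v)) = primitive (decode v).
Proof.
rewrite /primitive [X in _ = (X == _)](reindex_inj (@perm_inj _ s)) /=.
by congr (_ == _); apply: eq_bigr => i _; rewrite decode_swap.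
Qed.

Lemma negvK p d : involutive (@negv p d).
Proof. by move=> v; apply/ffunP => i; rewrite !ffunE rev_ordK. Qed.
Lemma negv_inj p d : injective (@negv p d).
Proof. exact: inv_inj (@negvK p d). Qed.
Lemma swapv_inj p d s : injective (@swapv p d s).
Proof.
apply: (can_inj (g := @swapv p d s^-1)) => v; apply/ffunP => i.
by rewrite !ffunE permKV.
Qed.

Definition Aset p d := [set v : {ffun 'I_d -> 'I_(2 * p + 1)} |
  (l1norm (decode v) <= p)%N && primitive (decode v)].

Lemma fp_char d (x : 'I_d -> int) i0 : x i0 != 0%R -> (forall j : 'I_d, (j < i0)%N -> x j = 0%R) ->
  first_nonzero_pos x = (0 < x i0)%R.
Proof.
move=> nz h; apply/idP/idP.
  case/existsP => i /andP[xi /forallP hx].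
  case: (ltngtP i i0) => c.
  - by rewrite h // in xi.
  - by move: (hx i0); rewrite c /= (negbTE nz).
  - by have <- : i = i0 by apply: val_inj.
move=> pos; apply/existsP; exists i0; rewrite pos /=; apply/forallP => j.
by apply/implyP => ltj; rewrite h.
Qed.

Lemma first_nz d (x : 'I_d -> int) i1 : x i1 != 0%R ->
  exists i0, x i0 != 0%R /\ (forall j : 'I_d, (j < i0)%N -> x j = 0%R).
Proof.
move=> nz.
case: (@arg_minnP _ i1 (fun i => x i != 0%R) (fun i : 'I_d => nat_of_ord i) nz) => i0 h0 hmin.
exists i0; split => // j ltj; apply/eqP; apply: contraTT ltj => nzj.
by rewrite -leqNgt hmin.
Qed.

Lemma fp_opp d (x y : 'I_d -> int) i1 : x i1 != 0%R -> (forall i, y i = - x i)%R ->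
  first_nonzero_pos y = ~~ first_nonzero_pos x.
Proof.
move=> nz hy; have [i0 [h0 hj]] := first_nz nz.
rewrite (fp_char h0 hj) (@fp_char _ y i0).
- by rewrite hy oppr_gt0 ltNge le_eqVlt eq_sym (negbTE h0).
- by rewrite hy oppr_eq0.
- by move=> j /hj; rewrite hy => ->; rewrite oppr0.
Qed.

Lemma prim_nz d (x : 'I_d -> int) : primitive x -> exists i, x i != 0%R.
Proof.
move=> pr; case: (boolP [exists i, x i != 0%R]) => [/existsP//|].
rewrite negb_exists => /forallP h; move: pr; rewrite /primitive big1 // => i _.
by move: (h i); rewrite negbK => /eqP ->.
Qed.

Lemma sumA p d (f : {ffun 'I_d -> 'I_(2 * p + 1)} -> nat) :
  (forall v, f (negv v) = f v) ->
  (\sum_(v in Aset p d) f v = 2 * \sum_(v in BP p d) f v)%N.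
Proof.
move=> hf.
rewrite (bigID (fun v => first_nonzero_pos (decode v))) /=.
have e1 : (\sum_(v in Aset p d | first_nonzero_pos (decode v)) f v = \sum_(v in BP p d) f v)%N.
  by apply: eq_bigl => v; rewrite !inE andbA.
have e2 : (\sum_(v in Aset p d | ~~ first_nonzero_pos (decode v)) f v = \sum_(v in BP p d) f v)%N.
  rewrite (reindex_inj (@negv_inj p d)); apply: eq_big => v; last by rewrite hf.
  rewrite !inE l1norm_neg primitive_neg.
  case: (boolP (primitive (decode v))) => pr; last by rewrite !andbF.
  have [i1 nz] := prim_nz pr.
  by rewrite (fp_opp nz (decode_neg v)) negbK andbT.
by rewrite e1 e2 addnn [RHS]mul2n.
Qed.

Definition cc p d (i : 'I_d) := (\sum_(v in BP p d) `|decode v i|%N)%N.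

Lemma swapA p d s v : (@swapv p d s v \in Aset p d) = (v \in Aset p d).
Proof. by rewrite !inE l1norm_swap primitive_swap. Qed.

Lemma cc_eq p d (i j : 'I_d) : cc p i = cc p j.
Proof.
have h k : (\sum_(v in Aset p d) `|decode v k|%N = 2 * cc p k)%N.
  by apply: sumA => v; rewrite absdec_neg.
apply/eqP; rewrite -(eqn_pmul2l (_ : 0 < 2)%N) // -!h; apply/eqP.
rewrite (reindex_inj (@swapv_inj p d (tperm i j))); apply: eq_big => v.
  by rewrite swapA.
by rewrite decode_swap tpermL.
Qed.

Lemma kappa_eq p d : (d * kappa p d = \sum_(v in BP p d) l1norm (decode v))%N.
Proof.
case: d => [|d]; first by rewrite mul0n big1 // => v _; rewrite /l1norm big_ord0.
have -> : kappa p d.+1 = cc p (ord0 : 'I_d.+1).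
  apply/eqP; rewrite eqn_leq; apply/andP; split.
    by apply/bigmax_leqP => i _; have := cc_eq p i ord0; rewrite /cc => ->.
  exact: (leq_bigmax (F := fun i => cc p i)).
rewrite /l1norm exchange_big /=.
rewrite (eq_bigr (fun _ => cc p (ord0 : 'I_d.+1))); last by move=> i _; rewrite -(cc_eq p i ord0).
by rewrite sum_nat_const card_ord.
Qed.

Definition Gset p d := [set v : {ffun 'I_d -> 'I_(2 * p + 1)} | (l1norm (decode v) < p)%N].
Definition incr p d (j : 'I_d) (v : {ffun 'I_d -> 'I_(2 * p + 1)}) : {ffun 'I_d -> 'I_(2 * p + 1)} :=
  [ffun i => if i == j then insubd (v i) p.+1 else v i].

Lemma decode_incr p d j v i : (0 < p)%N ->
  decode (@incr p d j v) i = if i == j then 1%R else decode v i.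
Proof.
move=> hp; rewrite /decode ffunE; case: eqP => // _.
rewrite insubdK; last by rewrite /=; lia.
lia.
Qed.

Lemma l1norm_incr p d j v : (0 < p)%N -> decode v j = 0%R ->
  l1norm (decode (@incr p d j v)) = (l1norm (decode v)).+1.
Proof.
move=> hp hv; rewrite /l1norm (bigD1 j) // [X in _ = X.+1](bigD1 j) //= decode_incr // eqxx hv /=.
congr (_ + _)%N; apply: eq_bigr => i /negbTE ne; by rewrite decode_incr // ne.
Qed.

Lemma incr_A p d j v : (0 < p)%N -> v \in Gset p d -> decode v j = 0%R -> @incr p d j v \in Aset p d.
Proof.
move=> hp; rewrite !inE => vG hv; rewrite l1norm_incr // vG /=.
rewrite /primitive -dvdn1; apply: (biggcdn_inf j) => //.
by rewrite decode_incr // eqxx.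
Qed.

Lemma sum_ind (T : finType) (A : {set T}) (P : pred T) :
  (\sum_(v in A) (P v : nat) = #|[set v in A | P v]|)%N.
Proof.
rewrite -sum1_card [RHS](eq_bigl (fun v => (v \in A) && P v)); last by move=> v; rewrite !inE.
rewrite big_mkcondr /=; apply: eq_bigr => v _; by case: (P v).
Qed.

Lemma count_j p d j : (0 < p)%N ->
  (#|[set v in Gset p d | decode v j == 0%R]| <= #|[set v in Aset p d | decode v j == 1%R]|)%N.
Proof.
move=> hp.
have inj : {in [set v in Gset p d | decode v j == 0%R] &, injective (@incr p d j)}.
  move=> v w; rewrite !inE => /andP[_ /eqP hv] /andP[_ /eqP hw] e; apply/ffunP => i.
  have := congr1 (fun f : {ffun _ -> _} => f i) e; rewrite !ffunE; case: eqP => [->|] // _.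
  move: hv hw; rewrite /decode => hv hw; apply: val_inj => /=; lia.
rewrite -(card_in_imset inj); apply: subset_leq_card; apply/fintype.subsetP => x /imsetP [v].
rewrite inE => /andP[vG /eqP vj] ->; rewrite inE incr_A // decode_incr // eqxx /=; by [].
Qed.

Lemma card_A p d : #|Aset p d| = (2 * #|BP p d|)%N.
Proof. by rewrite -!sum1_card; apply: sumA. Qed.

Lemma countG p d : (0 < p)%N ->
  (#|Gset p d| * d <= 2 * #|BP p d| * p + #|Gset p d| * p)%N.
Proof.
move=> hp.
have h1 v : v \in Gset p d -> (d <= \sum_(j < d) (decode v j == 0%R : nat) + p)%N.
  rewrite inE => vG; apply: (leq_trans _ (leq_add (leqnn _) (ltnW vG))).
  rewrite /l1norm -big_split /=.
  rewrite -[X in (X <= _)%N](card_ord d) -sum1_card; apply: leq_sum => j _.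
  by case: eqP => [|/eqP]; rewrite ?absz_gt0 //= => ->.
have h2 v : v \in Aset p d -> (\sum_(j < d) (decode v j == 1%R : nat) <= p)%N.
  rewrite inE => /andP[vA _]; apply: leq_trans vA; apply: leq_sum => j _.
  by case: eqP => [->|].
set N0 := (\sum_(v in Gset p d) \sum_(j < d) (decode v j == 0%R : nat))%N.
have e1 : (#|Gset p d| * d <= N0 + #|Gset p d| * p)%N.
  rewrite -!sum_nat_const /N0 -big_split /=; apply: leq_sum => v vG; exact: h1.
apply: (leq_trans e1); rewrite leq_add2r /N0 exchange_big /=.
apply: (@leq_trans (\sum_(j < d) \sum_(v in Aset p d) (decode v j == 1%R : nat))%N).
  apply: leq_sum => j _; rewrite !sum_ind; exact: count_j.
rewrite [X in (X <= _)%N]exchange_big /= -card_A -sum_nat_const; apply: leq_sum => v vA; exact: h2.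
Qed.

Lemma S_le p d : (\sum_(v in BP p d) l1norm (decode v) <= #|BP p d| * p)%N.
Proof.
rewrite -sum_nat_const; apply: leq_sum => v; by rewrite inE => /and3P[].
Qed.

Lemma S_ge p d : (#|BP p d| * p <= \sum_(v in BP p d) l1norm (decode v) + #|Gset p d| * p)%N.
Proof.
apply: (@leq_trans (\sum_(v in BP p d) (l1norm (decode v) + (v \in Gset p d) * p))%N).
  rewrite -sum_nat_const; apply: leq_sum => v _.
  case: (boolP (v \in Gset p d)) => [_|]; first by rewrite mul1n leq_addl.
  by rewrite inE -leqNgt addn0.
rewrite big_split /= leq_add2l -big_distrl /= leq_mul2r; apply/orP; right.
rewrite sum_ind; apply: subset_leq_card; apply/fintype.subsetP => v; rewrite inE; by case/andP.
Qed.

Lemma BP_gt0 p d : (0 < p)%N -> (0 < d)%N -> (0 < #|BP p d|)%N.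
Proof.
move=> hp hd.
have hp' : (p < 2 * p + 1)%N by lia.
pose v0 : {ffun 'I_d -> 'I_(2 * p + 1)} := [ffun _ => Ordinal hp'].
have dv0 i : decode v0 i = 0%R by rewrite /decode ffunE /= subrr.
pose i0 : 'I_d := Ordinal hd.
have v0G : v0 \in Gset p d by rewrite inE /l1norm big1 // => i _; rewrite dv0.
apply/card_gt0P; exists (incr i0 v0).
have := @incr_A p d i0 v0 hp v0G (dv0 i0); rewrite !inE => /andP[-> ->] /=.
apply/existsP; exists i0; rewrite decode_incr // eqxx /=; apply/forallP => j.
by [].
Qed.

Local Open Scope ring_scope.
Lemma real_key (R : realFieldType) (b s g D P : R) : 0 < b -> 0 < P -> 2 * P + 1 <= D -> 0 <= g ->
  s <= b * P -> b * P <= s + g * P -> g * D <= 2 * b * P + g * P ->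
  P - 4 * P ^+ 2 * (D + 1)^-1 <= s / b.
Proof.
move=> hb hP hD hg h1 h2 h3.
have hD1 : 0 < D + 1 by lra.
have key : (P * (D + 1) - 4 * P ^+ 2) * b <= s * (D + 1).
  have h4 : g * (D + 1) <= 4 * b * P by nra.
  nra.
rewrite -subr_ge0.
have -> : s / b - (P - 4 * P ^+ 2 * (D + 1)^-1) = (s * (D + 1) - (P * (D + 1) - 4 * P ^+ 2) * b) / (b * (D + 1)).
  by field; rewrite ?gt_eqF.
apply: divr_ge0; first by rewrite subr_ge0.
by apply: mulr_ge0; apply: ltW.
Qed.

Unset Implicit Arguments.
Local Open Scope classical_set_scope.
Local Open Scope ring_scope.

Theorem theorem7p4 (R : realType) (p : nat) (hp : (0 < p)%N) :
  (fun d : nat => (d%:R)^-1 * ((#|BP p d|%:R : R) / (kappa p d)%:R))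
    @ \oo --> (p%:R : R)^-1.
Proof.
pose t := fun d : nat => ((\sum_(v in BP p d) l1norm (decode v))%N%:R : R) / (#|BP p d|%:R : R).
have eqr : (fun d : nat => (d%:R)^-1 * ((#|BP p d|%:R : R) / (kappa p d)%:R)) = (fun d => (t d)^-1).
  apply: funext => d; rewrite /t -kappa_eq natrM invf_div mulrC -mulrA -invfM.
  by rewrite [X in _ * X^-1]mulrC.
rewrite eqr; apply: cvgV; first by rewrite pnatr_eq0 -lt0n.
have hlow : (fun d : nat => (p%:R : R) - 4 * p%:R ^+ 2 * (d.+1%:R)^-1) @ \oo --> (p%:R : R).
  have := cvgB (cvg_cst (p%:R : R)) (@cvgMl_tmp _ _ _ _ _ (4 * (p%:R : R) ^+ 2) _ (@cvg_harmonic R)).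
  move=> h; rewrite mulr0 subr0 in h; exact: h.
apply: (squeeze_cvgr _ hlow (cvg_cst (p%:R : R))).
near=> d.
have hd : (2 * p + 1 <= d)%N by near: d; apply: nbhs_infty_ge.
have hd0 : (0 < d)%N by lia.
have hB := BP_gt0 hp hd0.
have h1 := S_le p d.
have h2 := S_ge p d.
have h3 := countG d hp.
apply/andP; split; last first.
  rewrite /t ler_pdivrMr ?ltr0n // -natrM ler_nat; lia.
rewrite /t -[d.+1%:R]natr1; apply: (@real_key R _ _ (#|Gset p d|%:R)).
- by rewrite ltr0n.
- by rewrite ltr0n.
- by move: hd; rewrite -(ler_nat R) natrD natrM.
- exact: ler0n.
- by rewrite -natrM ler_nat.
- by rewrite -!natrM -natrD ler_nat.
- by rewrite -[2]/(2%N%:R) -!natrM -natrD ler_nat.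
Unshelve. all: by end_near.
Qed.
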